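(* For every $k\ge1$, $\mathrm{ABD}(k\text{-CNF})\le^{\mathrm{CV}}\mathrm{ABD}((k+1)\text{-NAE})$ and $\mathrm{P\text{-}ABD}(k\text{-CNF})\le^{\mathrm{CV}}\mathrm{P\text{-}ABD}((k+1)\text{-NAE})$.
   Context: $k\text{-CNF}$ is the constraint language of all clauses of arity $k$. For a sign pattern $s=(s_1,\dots,s_k)\in\{0,1\}^k$, let $0_s=(a_1,\dots,a_k)$ be the unique tuple with $s_i\oplus a_i=0$ for all $i$ and $1_s$ the unique tuple with $s_i\oplus a_i=1$ for all $i$, and let $R^s_{\mathrm{NAE}}=\{0,1\}^k\setminus\{0_s,1_s\}$. $k\text{-NAE}$ is the set of all relations $R^s_{\mathrm{NAE}}$ of arity $k$. An instance of $\mathrm{ABD}(\Gamma)$ is $(\mathrm{KB},H,M)$, $\mathrm{KB}$ a $\Gamma$-formula, $H,M$ sets of variables; it asks whether there is $E\subseteq H\cup\{\neg x:x\in H\}$ with $\mathrm{KB}\wedge E$ satisfiable and $\mathrm{KB}\wedge E\models m$ for all $m\in M$; $\mathrm{P\text{-}ABD}(\Gamma)$ additionally requires $E\subseteq H$. A CV-reduction $A\le^{\mathrm{CV}}B$ is a polynomial-time map $f$ with $I\in A\iff f(I)\in B$ and $|\mathrm{var}(f(I))|\le|\mathrm{var}(I)|+O(1)$. *)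

(* Defs.v *)
From mathcomp Require Import all_boot.
Set Implicit Arguments. Unset Strict Implicit. Unset Printing Implicit Defensive.

(* Variables are natural numbers.  A constraint application is a pair  *)
(* (s, xs) of a sign pattern s and a tuple of variables xs (repetitions *)

Definition constr := (seq bool * seq nat)%type.

Record Instance := MkInstance {
  kb : seq constr;
  hyp : seq nat;
  manif : seq nat
}.

Definition wf_arity (n : nat) (I : Instance) : bool :=
  all (fun c => (size c.1 == n) && (size c.2 == n)) (kb I).

(* Clause of arity k with sign pattern s: excludes the single tuple 0_s,
   i.e. the tuple with a_i = s_i for all i. *)
Definition holds_clause (a : nat -> bool) (c : constr) : bool :=
  has (fun p => a p.2 != p.1) (zip c.1 c.2).

Definition holds_nae (a : nat -> bool) (c : constr) : bool :=
  has (fun p => a p.2 != p.1) (zip c.1 c.2) &&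
  has (fun p => a p.2 == p.1) (zip c.1 c.2).

Definition abd_sem (holds : (nat -> bool) -> constr -> bool) (pos : bool)
    (I : Instance) : Prop :=
  exists E : seq (nat * bool),
    all (fun l => (l.1 \in hyp I) && (pos ==> l.2)) E /\
    let models := fun a : nat -> bool =>
      all (holds a) (kb I) && all (fun l => a l.1 == l.2) E in
    (exists a, models a) /\
    (forall a, models a -> all a (manif I)).

Definition ABD_CNF (k : nat) (I : Instance) : Prop :=
  wf_arity k I /\ abd_sem holds_clause false I.
Definition PABD_CNF (k : nat) (I : Instance) : Prop :=
  wf_arity k I /\ abd_sem holds_clause true I.
Definition ABD_NAE (k : nat) (I : Instance) : Prop :=
  wf_arity k I /\ abd_sem holds_nae false I.
Definition PABD_NAE (k : nat) (I : Instance) : Prop :=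
  wf_arity k I /\ abd_sem holds_nae true I.

Definition vars (I : Instance) : seq nat :=
  undup (flatten (map snd (kb I)) ++ hyp I ++ manif I).
Definition nvars (I : Instance) : nat := size (vars I).

Inductive Sym := S0 | S1 | Sep | Open | Close.

Fixpoint binf (fuel n : nat) : seq bool :=
  match fuel with
  | 0 => [::]
  | f.+1 => if n == 0 then [::] else odd n :: binf f n./2
  end.
Definition bin (n : nat) : seq bool := binf n n.

Definition enc_bool (b : bool) : seq Sym := [:: if b then S1 else S0].
Definition enc_nat (n : nat) : seq Sym := map (fun b => if b then S1 else S0) (bin n).
Definition enc_list (T : Type) (e : T -> seq Sym) (xs : seq T) : seq Sym :=
  Open :: flatten [seq e x ++ [:: Sep] | x <- xs] ++ [:: Close].
Definition enc_constr (c : constr) : seq Sym :=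
  Open :: enc_list enc_bool c.1 ++ enc_list enc_nat c.2 ++ [:: Close].
Definition enc (I : Instance) : seq Sym :=
  enc_list enc_constr (kb I) ++ enc_list enc_nat (hyp I) ++ enc_list enc_nat (manif I).

(* States 'I_nq.+1 (start state ord0); tape symbols 'I_ns.+1, ord0 is   *)
(* the blank.  delta q a = None means halt; otherwise (q', a', right?). *)

Record TM := MkTM {
  nq : nat;
  ns : nat;
  delta : 'I_nq.+1 -> 'I_ns.+1 -> option ('I_nq.+1 * 'I_ns.+1 * bool)
}.

(* configuration: state, reversed left part, scanned cell, right part *)
Definition config (M : TM) :=
  ('I_(nq M).+1 * seq 'I_(ns M).+1 * 'I_(ns M).+1 * seq 'I_(ns M).+1)%type.

Definition step (M : TM) (c : config M) : option (config M) :=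
  let: (q, l, a, r) := c in
  match delta q a with
  | None => None
  | Some (q', a', true) =>
      Some (q', a' :: l, head ord0 r, behead r)
  | Some (q', a', false) =>
      Some (q', behead l, head ord0 l, a' :: r)
  end.

(* run for at most n steps; Some c iff the machine halts in c within n steps *)
Fixpoint run (M : TM) (n : nat) (c : config M) : option (config M) :=
  match @step M c with
  | None => Some c
  | Some c' => if n is n'.+1 then @run M n' c' else None
  end.

Definition sym_code (s : Sym) : nat :=
  match s with S0 => 1 | S1 => 2 | Sep => 3 | Open => 4 | Close => 5 end.

Definition to_tape (M : TM) (w : seq Sym) : seq 'I_(ns M).+1 :=
  map (fun s => inord (sym_code s)) w.

Definition init (M : TM) (w : seq Sym) : config M :=
  (ord0, [::], head ord0 (to_tape M w), behead (to_tape M w)).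

Definition output (M : TM) (c : config M) : seq 'I_(ns M).+1 :=
  let: (_, _, a, r) := c in
  take (find (fun x => x == ord0) (a :: r)) (a :: r).

Definition poly_time (f : Instance -> Instance) : Prop :=
  exists (M : TM) (d : nat),
    5 <= ns M /\
    forall I, exists cf,
      @run M ((size (enc I)) ^ d + d) (init M (enc I)) = Some cf /\
      @output M cf = to_tape M (enc (f I)).

Definition CV_reduction (A B : Instance -> Prop) : Prop :=
  exists f : Instance -> Instance,
    poly_time f /\
    (forall I, A I <-> B (f I)) /\
    (exists c : nat, forall I, nvars (f I) <= nvars I + c).

(* Main.v *)
Require Import Defs.
From mathcomp Require Import all_boot.
From mathcomp Require Import zify.
Set Implicit Arguments. Unset Strict Implicit. Unset Printing Implicit Defensive.

Lemma binf_eq f1 f2 n : n <= f1 -> n <= f2 -> binf f1 n = binf f2 n.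
Proof.
elim: f1 f2 n => [|f1 IH] [|f2] n /= h1 h2.
1-3: by try (have -> : n = 0 by lia).
case: (n =P 0) => // hn; congr (_ :: _); apply: IH; lia.
Qed.

Definition g (x : nat) := x.*2.+1.

Definition dig (b : bool) := if b then S1 else S0.

Lemma enc_nat_g x : enc_nat (g x) = S1 :: enc_nat x.
Proof.
rewrite /enc_nat /bin /g /=.
rewrite odd_double uphalf_double /=; congr (_ :: _); congr (map _ _); apply: binf_eq; lia.
Qed.

Lemma enc_nat0 : enc_nat 0 = [::]. Proof. by []. Qed.

Definition str (q : nat) (s : Sym) : nat * seq Sym :=
  match q, s with
  | 0, Open => (1, [:: Open])
  | 1, Open => (2, [:: Open])
  | 1, Sep => (1, [:: Sep])
  | 1, Close => (8, [:: Close])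
  | 2, Open => (3, [:: Open])
  | 3, Close => (4, [:: S1; Sep; Close])
  | 3, _ => (3, [:: s])
  | 4, Open => (5, [:: Open])
  | 5, Close => (7, [:: Sep; Close])
  | 5, Sep => (5, [:: S1; Sep])
  | 5, _ => (6, [:: S1; s])
  | 6, Sep => (5, [:: Sep])
  | 6, _ => (6, [:: s])
  | 7, Close => (1, [:: Close])
  | 8, Open => (9, [:: Open; Sep])
  | 9, Close => (11, [:: Close])
  | 9, Sep => (9, [:: S1; Sep])
  | 9, _ => (10, [:: S1; s])
  | 10, Sep => (9, [:: Sep])
  | 10, _ => (10, [:: s])
  | 11, Open => (12, [:: Open; Sep])
  | 12, Close => (14, [:: Close])
  | 12, Sep => (12, [:: S1; Sep])
  | 12, _ => (13, [:: S1; s])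
  | 13, Sep => (12, [:: Sep])
  | 13, _ => (13, [:: s])
  | _, _ => (15, [::])
  end.

Definition sn q s := minn (str q s).1 15.
Definition so q s := (str q s).2.

Lemma sn_lt q s : sn q s < 16.
Proof. rewrite /sn; have := geq_minr (str q s).1 15; lia. Qed.

Lemma so_size q s : size (so q s) <= 3.
Proof.
rewrite /so; do 16 (destruct q as [|q]; [by case: s|]); by case: s.
Qed.

Fixpoint strun q w : nat * seq Sym :=
  if w is s :: w' then let: (q2, o2) := strun (sn q s) w' in (q2, so q s ++ o2)
  else (q, [::]).

Lemma strun_cat q w1 w2 : strun q (w1 ++ w2) =
  let: (q1, o1) := strun q w1 in let: (q2, o2) := strun q1 w2 in (q2, o1 ++ o2).
Proof.
elim: w1 q => [|s w1 IH] q /=; first by case: (strun q w2).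
rewrite IH; case: (strun (sn q s) w1) => q1 o1; case: (strun q1 w2) => q2 o2.
by rewrite catA.
Qed.

Lemma digits q bl : [|| q == 6, q == 10 | q == 13] ->
  strun q (map dig bl) = (q, map dig bl).
Proof.
by case/or3P=> /eqP ->; elim: bl => [|[] bl IH] //=; rewrite IH.
Qed.

Lemma elem q x : [|| q == 5, q == 9 | q == 12] ->
  strun q (enc_nat x ++ [:: Sep]) = (q, enc_nat (g x) ++ [:: Sep]).
Proof.
move=> hq; rewrite enc_nat_g /enc_nat.
case: (bin x) => [|b bl]; first by case/or3P: hq => /eqP ->.
rewrite map_cons cat_cons.
case/or3P: hq => /eqP -> /=;
 [ have hm : strun 6 (map dig bl ++ [:: Sep]) = (5, map dig bl ++ [:: Sep])
 | have hm : strun 10 (map dig bl ++ [:: Sep]) = (9, map dig bl ++ [:: Sep])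
 | have hm : strun 13 (map dig bl ++ [:: Sep]) = (12, map dig bl ++ [:: Sep]) ];
 try (rewrite strun_cat digits //=; done);
 by case: b; rewrite -/(dig true) -/(dig false) /= ?hm.
Qed.

Lemma flatten_c (T : Type) (s : seq T) ss : flatten (s :: ss) = s ++ flatten ss.
Proof. by []. Qed.

Lemma elems q xs : [|| q == 5, q == 9 | q == 12] ->
  strun q (flatten [seq enc_nat x ++ [:: Sep] | x <- xs]) =
  (q, flatten [seq enc_nat x ++ [:: Sep] | x <- map g xs]).
Proof.
move=> hq; elim: xs => [|x xs IH] //=.
by rewrite strun_cat elem // IH.
Qed.

Lemma bools bs : strun 3 (flatten [seq enc_bool b ++ [:: Sep] | b <- bs]) =
  (3, flatten [seq enc_bool b ++ [:: Sep] | b <- bs]).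
Proof. by elim: bs => [|[] bs IH] //=; rewrite IH. Qed.

Definition tr (c : constr) : constr := (c.1 ++ [:: true], map g c.2 ++ [:: 0]).

Definition f (I : Instance) : Instance :=
  MkInstance (map tr (kb I)) (0 :: map g (hyp I)) (0 :: map g (manif I)).

Lemma constr_run c : strun 1 (enc_constr c ++ [:: Sep]) = (1, enc_constr (tr c) ++ [:: Sep]).
Proof.
case: c => s xs; rewrite /enc_constr /enc_list /tr /=.
rewrite -!catA strun_cat bools /sn /= -!catA strun_cat elems //=.
by rewrite /sn /= !map_cat !flatten_cat /= -!catA.
Qed.

Lemma constrs cs : strun 1 (flatten [seq enc_constr c ++ [:: Sep] | c <- cs]) =
  (1, flatten [seq enc_constr c ++ [:: Sep] | c <- map tr cs]).
Proof. elim: cs => [|c cs IH] //; by rewrite !map_cons !flatten_c strun_cat constr_run IH. Qed.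

Lemma enc_run I : strun 0 (enc I) = (14, enc (f I)).
Proof.
case: I => K H Mf; rewrite /enc /enc_list /f /=.
rewrite -!catA strun_cat constrs /sn /= -?catA strun_cat elems //= -?catA strun_cat elems //=.
Qed.

From Stdlib Require Import FunctionalExtensionality.

Lemma gK x : (g x)./2 = x.
Proof. by rewrite /g -[x.*2.+1]/(true + x.*2) half_bit_double. Qed.

Lemma g_neq0 x : (g x == 0) = false. Proof. by []. Qed.

Lemma zip_map_r (s : seq bool) (xs : seq nat) :
  zip s (map g xs) = map (fun p => (p.1, g p.2)) (zip s xs).
Proof. by elim: s xs => [|b s IH] [|x xs] //=; rewrite IH. Qed.

Lemma holds_tr (a : nat -> bool) c : size c.1 = size c.2 -> a 0 = true ->
  holds_nae a (tr c) = holds_clause (fun x => a (g x)) c.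
Proof.
case: c => s xs /= hs ha; rewrite /holds_nae /holds_clause /tr /=.
rewrite zip_cat ?size_map // !has_cat /= ha /= orbF orbT andbT.
by rewrite zip_map_r has_map.
Qed.

Lemma wf_f k I : wf_arity k.+1 (f I) = wf_arity k I.
Proof.
rewrite /wf_arity /f /= all_map; apply: eq_all => c /=.
by rewrite !size_cat !size_map !addn1 !eqSS.
Qed.

Lemma kb_link k I (a : nat -> bool) : wf_arity k I -> a 0 = true ->
  all (holds_nae a) (kb (f I)) = all (holds_clause (fun x => a (g x))) (kb I).
Proof.
rewrite /wf_arity => /allP hw ha; rewrite /f /= all_map; apply: eq_in_all => c hc /=.
by apply: holds_tr => //; case/andP: (hw c hc) => /eqP -> /eqP ->.
Qed.

Definition ext (a : nat -> bool) (y : nat) := if y == 0 then true else a y./2.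

Lemma ext_g a : (fun x => ext a (g x)) = a.
Proof. by apply: functional_extensionality => x; rewrite /ext gK. Qed.

Lemma sem_equiv pos k I : wf_arity k I ->
  abd_sem holds_clause pos I <-> abd_sem holds_nae pos (f I).
Proof.
move=> hw; split.
- case=> E [hE [[a0 ha0] hent]].
  exists ((0, true) :: map (fun l => (g l.1, l.2)) E); split; [|split].
  + rewrite /= implybT /= all_map; apply/allP => l hl /=.
    case/andP: (allP hE l hl) => h1 ->; rewrite andbT.
    by rewrite inE; apply/orP; right; apply: map_f.
  + exists (ext a0); rewrite (kb_link hw) // ext_g.
    case/andP: ha0 => -> /= hE0; rewrite all_map.
    by apply: sub_all hE0 => l /=; rewrite /ext gK.
  + move=> a /andP [hk /= /andP [/eqP h0 hEa]].
    rewrite (kb_link hw) // in hk.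
    have := hent (fun x => a (g x)); rewrite hk /= all_map in hEa *.
    move=> /(_ hEa) hm; rewrite h0 /= all_map; exact hm.
- case=> E' [hE' [[a0 ha0] hent]].
  have h00 : a0 0 = true.
    by have := hent a0 ha0; rewrite /= => /andP [].
  have hmem : forall l, l \in E' -> l.1 != 0 -> g (l.1./2) = l.1.
    move=> l hl hn; case/andP: (allP hE' l hl); rewrite /= inE (negbTE hn) /=.
    by case/mapP => x _ -> _; rewrite gK.
  exists [seq (l.1./2, l.2) | l <- E' & l.1 != 0]; split; [|split].
  + rewrite all_map; apply/allP => l; rewrite mem_filter => /andP [hn hl] /=.
    case/andP: (allP hE' l hl); rewrite /= inE (negbTE hn) /= => /mapP [x hx ->] ->.
    by rewrite gK hx.
  + exists (fun x => a0 (g x)); case/andP: ha0; rewrite (kb_link hw) // => -> hE0 /=.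
    rewrite all_map; apply/allP => l; rewrite mem_filter => /andP [hn hl] /=.
    by rewrite hmem //; exact: (allP hE0 l hl).
  + move=> a /andP [hk hEa].
    have := hent (ext a); rewrite (kb_link hw) // ?ext_g //= hk /=.
    rewrite all_map in hEa.
    have -> : all (fun l => ext a l.1 == l.2) E'.
      apply/allP => l hl; case: (l.1 =P 0) => [h0|/eqP hn].
      * case/andP: ha0 => _ /allP /(_ l hl) /eqP <-.
        by rewrite h0 h00.
      * have := allP hEa l; rewrite mem_filter hn hl /= => /(_ isT).
        by rewrite -(hmem l hl hn) /ext gK g_neq0.
    by move=> /(_ isT); rewrite all_map -{2}(ext_g a).
Qed.

Lemma nvars_f I : nvars (f I) <= nvars I + 1.
Proof.
rewrite /nvars addn1.
have -> : (size (vars I)).+1 = size (0 :: map g (vars I)) by rewrite /= size_map.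
apply: uniq_leq_size; first exact: undup_uniq.
move=> y; rewrite /vars mem_undup !mem_cat => /or3P [].
- case/flattenP => s; rewrite -map_comp => /mapP [c hc ->] /=.
  rewrite mem_cat inE => /orP [/mapP [x hx ->]|/eqP ->]; last by rewrite inE.
  rewrite inE; apply/orP; right; apply: map_f; rewrite mem_undup mem_cat.
  by apply/orP; left; apply/flattenP; exists c.2 => //; apply: map_f.
- rewrite /= inE => /orP [/eqP ->|/mapP [x hx ->]]; first by rewrite inE eqxx.
  by rewrite inE; apply/orP; right; apply: map_f; rewrite mem_undup !mem_cat hx orbT.
- rewrite /= inE => /orP [/eqP ->|/mapP [x hx ->]]; first by rewrite inE eqxx.
  by rewrite inE; apply/orP; right; apply: map_f; rewrite mem_undup !mem_cat hx !orbT.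
Qed.

Definition code (s : Sym) : 'I_8 := inord (sym_code s).
Definition dec (n : nat) : Sym :=
  match n with 1 => S0 | 2 => S1 | 3 => Sep | 4 => Open | _ => Close end.

Definition tn (q : 'I_16) (a : 'I_8) : 'I_16 := inord (sn q (dec a)).
Definition to (q : 'I_16) (a : 'I_8) : seq 'I_8 := map code (so q (dec a)).
Fixpoint trw (q : 'I_16) (v : seq 'I_8) : seq 'I_8 :=
  if v is a :: v' then to q a ++ trw (tn q a) v' else [::].

Lemma code_val s : nat_of_ord (code s) = sym_code s.
Proof. by rewrite /code inordK //; case: s. Qed.

Lemma dec_code s : dec (code s) = s.
Proof. by rewrite code_val; case: s. Qed.

Lemma bridge w q : q < 16 -> trw (inord q) (map code w) = map code (strun q w).2.
Proof.
elim: w q => [|s w IH] q hq //=.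
rewrite /to /tn dec_code inordK // IH ?sn_lt //.
by case: (strun (sn q s) w) => q2 o2 /=; rewrite map_cat.
Qed.

Definition X : 'I_8 := inord 6.
Definition hash : 'I_8 := inord 7.
Lemma X_val : nat_of_ord X = 6. Proof. by rewrite inordK. Qed.
Lemma hash_val : nat_of_ord hash = 7. Proof. by rewrite inordK. Qed.

Definition okO (a : 'I_8) := (nat_of_ord a != 0) && (nat_of_ord a != 6).

Lemma to_okO q a : all okO (to q a).
Proof. rewrite /to; elim: (so q (dec a)) => //= s w ->; rewrite andbT /okO code_val; by case: s. Qed.

Lemma to_size q a : size (to q a) <= 3.
Proof. by rewrite size_map so_size. Qed.

Definition QI := ((('I_16 + 'I_16) + ('I_16 * 'I_8 * 'I_3)) + unit)%type.
Definition PH := option QI.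
Definition pRet (q : 'I_16) : PH := Some (inl (inl (inl q))).
Definition pFetch (q : 'I_16) : PH := Some (inl (inl (inr q))).
Definition pCarry (q : 'I_16) (a : 'I_8) (i : 'I_3) : PH := Some (inl (inr (q, a, i))).
Definition pDone : PH := Some (inr tt).
Definition q0 : 'I_16 := inord 0.

Definition D (p : PH) (c : 'I_8) : option (PH * 'I_8 * bool) :=
  match p with
  | None => if nat_of_ord c == 0 then Some (pRet q0, hash, false) else Some (None, c, true)
  | Some (inl (inl (inl q))) =>
      if (nat_of_ord c == 6) || (nat_of_ord c == 0) then Some (pFetch q, c, true)
      else Some (pRet q, c, false)
  | Some (inl (inl (inr q))) =>
      if nat_of_ord c == 7 then Some (pDone, c, true) else Some (pCarry q c ord0, X, true)
  | Some (inl (inr (q, a, i))) =>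
      if nat_of_ord c != 0 then Some (pCarry q a i, c, true) else
      let w := to q a in
      if i < size w then
        (if i.+1 < size w then Some (pCarry q a (inord i.+1), nth ord0 w i, true)
         else Some (pRet (tn q a), nth ord0 w i, false))
      else Some (pRet (tn q a), ord0, false)
  | Some (inr _) => None
  end.

Definition NQ := #|{: QI}|.
Definition encS (p : PH) : 'I_NQ.+1 :=
  if p is Some x then lift ord0 (enum_rank x) else ord0.
Definition decS (i : 'I_NQ.+1) : PH := omap enum_val (unlift ord0 i).

Lemma decS_encS p : decS (encS p) = p.
Proof.
case: p => [x|]; rewrite /decS /encS; last by rewrite unlift_none.
by rewrite liftK /= enum_rankK.
Qed.

Definition delta (i : 'I_NQ.+1) (c : 'I_8) : option ('I_NQ.+1 * 'I_8 * bool) :=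
  omap (fun t => (encS t.1.1, t.1.2, t.2)) (D (decS i) c).

Definition M : TM := @MkTM NQ 7 delta.

Definition mk (p : PH) (l r : seq 'I_8) : config M := (encS p, l, head ord0 r, behead r).

Lemma stepR p c l r p' c' : D p c = Some (p', c', true) ->
  step (mk p l (c :: r)) = Some (mk p' (c' :: l) r).
Proof. by move=> h; rewrite /step /mk /= /delta decS_encS h. Qed.

Lemma stepL p c l r p' c' : D p c = Some (p', c', false) ->
  step (mk p l (c :: r)) = Some (mk p' (behead l) (head ord0 l :: c' :: r)).
Proof. by move=> h; rewrite /step /mk /= /delta decS_encS h. Qed.

Lemma stepN p l r : D p (head ord0 r) = None -> step (mk p l r) = None.
Proof. by move=> h; rewrite /step /mk /= /delta decS_encS h. Qed.

Fixpoint steps (n : nat) (c : config M) : option (config M) :=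
  if n is n'.+1 then (if step c is Some c' then steps n' c' else None) else Some c.

Lemma steps_trans n m c c1 c2 :
  steps n c = Some c1 -> steps m c1 = Some c2 -> steps (n + m) c = Some c2.
Proof.
elim: n c => [|n IH] c /=; first by case=> ->.
case: (step c) => // c' h; exact: IH.
Qed.

Lemma steps1 c c' : step c = Some c' -> steps 1 c = Some c'.
Proof. by move=> /= ->. Qed.

Lemma stepsS n c c' : step c = Some c' -> steps n.+1 c = steps n c'.
Proof. by move=> /= ->. Qed.

Lemma run_steps n m c c' : steps n c = Some c' -> run (n + m) c = run m c'.
Proof.
elim: n c => [|n IH] c /=; first by case=> ->.
rewrite ?addSn /=; case: (step c) => // c'' h; exact: IH.
Qed.

Lemma run_halt m (c : config M) : step c = None -> run m c = Some c.
Proof. by case: m => [|m] /= ->. Qed.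

Lemma scanR p s L R : (forall y, y \in s -> D p y = Some (p, y, true)) ->
  steps (size s) (mk p L (s ++ R)) = Some (mk p (rev s ++ L) R).
Proof.
elim: s L => [|y s IH] L hD //.
rewrite cat_cons [size _]/= (stepsS _ (stepR _ _ (hD y (mem_head _ _)))) IH; last by move=> z hz; apply: hD; rewrite inE hz orbT.
by rewrite rev_cons cat_rcons.
Qed.

Lemma scanL p s L b R : (forall y, y \in b :: s -> D p y = Some (p, y, false)) ->
  steps (size s).+1 (mk p (s ++ L) (b :: R)) =
  Some (mk p (behead L) (head ord0 L :: rev s ++ b :: R)).
Proof.
elim: s b R => [|y s IH] b R hD.
  by rewrite (stepsS _ (stepL _ _ (hD b (mem_head _ _)))).
rewrite cat_cons [size _]/= (stepsS _ (stepL _ _ (hD b (mem_head _ _)))) [behead _]/= [head _ _]/=.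
rewrite IH; first by rewrite rev_cons cat_rcons.
by move=> z hz; apply: hD; rewrite inE hz orbT.
Qed.

Definition okRet (a : 'I_8) := (nat_of_ord a != 6) && (nat_of_ord a != 0).
Definition stopRet (a : 'I_8) := (nat_of_ord a == 6) || (nat_of_ord a == 0).

Lemma D_ret_ok q y : okRet y -> D (pRet q) y = Some (pRet q, y, false).
Proof. by rewrite /okRet /D => /andP [/negbTE -> /negbTE ->]. Qed.

Lemma D_ret_stop q y : stopRet y -> D (pRet q) y = Some (pFetch q, y, true).
Proof. by rewrite /stopRet /D => ->. Qed.

Lemma ret_run q T L R : all okRet T -> stopRet (head ord0 L) ->
  steps (size T).+1 (mk (pRet q) (behead (rev T ++ L)) (head ord0 (rev T ++ L) :: R)) =
  Some (mk (pFetch q) (head ord0 L :: behead L) (T ++ R)).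
Proof.
case/lastP: T => [|T c] hT hL.
  by rewrite (stepsS _ (stepR _ _ (D_ret_stop q hL))).
rewrite rev_rcons size_rcons -addn1.
have -> : behead ((c :: rev T) ++ L) = rev T ++ L by [].
have -> : head ord0 ((c :: rev T) ++ L) = c by [].
apply: (steps_trans (c1 := mk (pRet q) (behead L) (head ord0 L :: rev (rev T) ++ c :: R))).
  rewrite -(size_rev T); apply: scanL => y hy; apply: D_ret_ok.
  move: hT; rewrite all_rcons => /andP [hc hT].
  by move: hy; rewrite inE mem_rev => /orP [/eqP ->|hy] //; exact: (allP hT).
by rewrite revK (stepsS _ (stepR _ _ (D_ret_stop q hL))) cat_rcons.
Qed.

Lemma writes q a m : forall i L, i + m.+1 = size (to q a) ->
  steps m.+1 (mk (pCarry q a (inord i)) L [:: ord0]) =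
  Some (mk (pRet (tn q a)) (behead (rev (take m (drop i (to q a))) ++ L))
        (head ord0 (rev (take m (drop i (to q a))) ++ L) :: [:: nth ord0 (to q a) (i + m)])).
Proof.
have hs := to_size q a.
elim: m => [|m IH] i L hi.
- have hD : D (pCarry q a (inord i)) ord0 = Some (pRet (tn q a), nth ord0 (to q a) i, false).
    rewrite /D /pCarry /= (@inordK 2 i); last by lia.
    have h1 : i < size (to q a) by lia.
    have h2 : (i.+1 < size (to q a)) = false by apply/negbTE; lia.
    by rewrite h1 h2.
  by rewrite (stepsS _ (stepL _ _ hD)) addn0 take0.
have hD : D (pCarry q a (inord i)) ord0 =
          Some (pCarry q a (inord i.+1), nth ord0 (to q a) i, true).
  rewrite /D /pCarry /= (@inordK 2 i); last by lia.
  have h1 : i < size (to q a) by lia.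
  have h2 : (i.+1 < size (to q a)) by lia.
  by rewrite h1 h2.
rewrite (stepsS _ (stepR _ _ hD)).
have -> : mk (pCarry q a (inord i.+1)) (nth ord0 (to q a) i :: L) [::] =
          mk (pCarry q a (inord i.+1)) (nth ord0 (to q a) i :: L) [:: ord0] by [].
rewrite IH; last by lia.
rewrite addSnnS (drop_nth ord0 (_ : i < size (to q a))); last by lia.
by rewrite take_cons rev_cons cat_rcons.
Qed.

Definition okIn (a : 'I_8) := okO a && (nat_of_ord a != 7).

Lemma init_run u : all okIn u ->
  steps (size u + (size u).+2) (mk None [::] u) = Some (mk (pFetch q0) [:: ord0] (u ++ [:: hash])).
Proof.
move=> hu.
apply: (steps_trans (c1 := mk None (rev u ++ [::]) [::])).
  rewrite -{2}(cats0 u); apply: scanR => y hy.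
  have := allP hu y hy; rewrite /okIn /okO /D => /andP [/andP [/negbTE -> _] _] //.
have -> : mk None (rev u ++ [::]) [::] = mk None (rev u ++ [::]) [:: ord0] by [].
have hD : D None ord0 = Some (pRet q0, hash, false) by [].
rewrite (stepsS _ (stepL _ _ hD)).
have := @ret_run q0 u [::] [:: hash].
rewrite cats0; apply => //.
by apply/allP => y hy; have := allP hu y hy; rewrite /okIn /okO /okRet => /andP [/andP [-> ->] _].
Qed.

Lemma okO_ne0 (o : seq 'I_8) : all okO o -> has (fun x => x == ord0) o = false.
Proof.
elim: o => [|x o IH] //= /andP [hx ho]; rewrite IH // orbF.
by apply/negbTE; move: hx; rewrite /okO => /andP [h _]; apply: contra h => /eqP ->.
Qed.

Lemma out_mk p l o pad : all okO o -> (pad = [::] \/ pad = [:: ord0]) ->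
  output (mk p l (o ++ pad)) = o.
Proof.
move=> ho hp; case: o ho => [|x o] ho.
  by case: hp => ->.
have -> : output (mk p l ((x :: o) ++ pad)) =
  take (find (fun y => y == ord0) ((x :: o) ++ pad)) ((x :: o) ++ pad) by [].
rewrite find_cat okO_ne0 //.
have -> : find (fun y => y == ord0) pad = 0 by case: hp => ->.
by rewrite addn0 take_size_cat.
Qed.

Lemma nseqX j : X :: nseq j X ++ [:: ord0] = nseq j.+1 X ++ [:: ord0].
Proof. by []. Qed.

Lemma inord0_3 : (inord 0 : 'I_3) = ord0.
Proof. by apply: val_inj; rewrite /= inordK. Qed.

Lemma loop v : forall j q o pad, all okIn v -> all okO o -> (pad = [::] \/ pad = [:: ord0]) ->
  exists N cf, N <= size v * (5 * size v + 2 * size o + 7) + 1 /\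
    steps N (mk (pFetch q) (nseq j X ++ [:: ord0]) (v ++ hash :: o ++ pad)) = Some cf /\
    step cf = None /\ output cf = o ++ trw q v.
Proof.
elim: v => [|a v IH] j q o pad hv ho hp.
  exists 1, (mk pDone (hash :: nseq j X ++ [:: ord0]) (o ++ pad)); split => //; split.
    apply: steps1; apply: stepR; rewrite /D /pFetch /=; case: ifP => // /negP []; apply/eqP; exact: hash_val.
  split; first by apply: stepN.
  by rewrite out_mk // cats0.
move: hv => /= /andP [ha hv].
set K := nseq j X ++ [:: ord0].
set w := to q a.
set T := v ++ hash :: o.
have hT : all okRet T.
  have hh : okRet hash by rewrite /okRet hash_val.
  rewrite /T all_cat /= hh /=; apply/andP; split.
    by apply/allP => y hy; have := allP hv y hy; rewrite /okIn /okO /okRet => /andP [/andP [-> ->] _].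
  by apply/allP => y hy; have := allP ho y hy; rewrite /okO /okRet => /andP [-> ->].
have hD1 : D (pFetch q) a = Some (pCarry q a ord0, X, true).
  by move: ha; rewrite /okIn /D /pFetch /= => /andP [_ /negbTE ->].
have hscan : steps (size T) (mk (pCarry q a ord0) (X :: K) (v ++ hash :: o ++ pad)) =
             Some (mk (pCarry q a ord0) (rev T ++ X :: K) [:: ord0]).
  have -> : v ++ hash :: o ++ pad = T ++ pad by rewrite /T -catA.
  rewrite scanR; first by case: hp => ->.
  move=> y hy; have : nat_of_ord y != 0.
    by move: (allP hT y hy); rewrite /okRet => /andP [_ ->].
  by rewrite /D /pCarry /= => ->.
have [k [o' [pad' [hk [ho' [hp' [hso' hw]]]]]]] : exists k o' pad',
  k <= 3 + size T + 4 /\ o' = o ++ w /\ (pad' = [::] \/ pad' = [:: ord0]) /\ all okO o' /\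
  steps k (mk (pCarry q a ord0) (rev T ++ X :: K) [:: ord0]) =
  Some (mk (pFetch (tn q a)) (nseq j.+1 X ++ [:: ord0]) (v ++ hash :: o' ++ pad')).
  have hwo : all okO (o ++ w) by rewrite all_cat ho to_okO.
  have hws : size w <= 3 by apply: to_size.
  have hX : stopRet (head ord0 (X :: K)) by rewrite /stopRet /= X_val.
  case hwe: w => [|w0 w'].
  - exists (size T).+2, o, [:: ord0]; rewrite ?cats0; split; first by lia.
    split => //; split; first by right.
    split; first by move: hwo; rewrite hwe cats0.
    have hD : D (pCarry q a ord0) ord0 = Some (pRet (tn q a), ord0, false).
      by rewrite /D /pCarry /= -/w hwe.
    rewrite (stepsS _ (stepL _ _ hD)).
    have := @ret_run (tn q a) T (X :: K) [:: ord0] hT hX.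
    by rewrite /T -catA.
  - have hsz : size w = (size w').+1 by rewrite hwe.
    set m := size w'.
    exists (m.+1 + (size T + m).+1), (o ++ w), [::]; split.
      by rewrite -/m in hsz; lia.
    split; first by rewrite -hwe.
    split; first by left.
    split => //.
    apply: (steps_trans (c1 := mk (pRet (tn q a))
        (behead (rev (take m (drop 0 w)) ++ (rev T ++ X :: K)))
        (head ord0 (rev (take m (drop 0 w)) ++ (rev T ++ X :: K)) :: [:: nth ord0 w (0 + m)]))).
      by rewrite -inord0_3; apply: writes; rewrite add0n -/w hsz.
    rewrite drop0 add0n catA -rev_cat.
    have -> : (size T + m).+1 = (size (T ++ take m w)).+1.
      by rewrite size_cat size_take hsz ltnSn.
    rewrite ret_run.
    + rewrite /T -!catA.
      have -> : take m w ++ [:: nth ord0 w m] = w.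
        by rewrite cats1 -take_nth ?hsz // take_oversize // hsz.
      by rewrite cats0.
    + rewrite all_cat hT /=; apply/allP => y hy.
      by have := allP (to_okO q a) y (mem_take hy); rewrite /okO /okRet => /andP [-> ->].
    + exact: hX.
have [N [cf [hN [hs [hstop hout]]]]] := IH j.+1 (tn q a) o' pad' hv hso' hp'.
exists (1 + (size T + (k + N))), cf; split; last split.
- rewrite ho' size_cat in hN.
  have hws : size w <= 3 by apply: to_size.
  have hsT : size T = size v + (size o).+1 by rewrite /T size_cat.
  rewrite hsT in hk; rewrite /=; nia.
- apply: (steps_trans (steps1 (stepR _ _ hD1))).
  apply: (steps_trans hscan); apply: (steps_trans hw); exact: hs.
- by split => //; rewrite hout ho' /= catA.
Qed.

Lemma bound n : 5 * n ^ 2 + 9 * n + 3 <= n ^ 20 + 20.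
Proof.
case: (leqP n 1) => hn.
  by case: n hn => [|[|]].
have h : 16 <= n ^ 18.
  have : 2 ^ 18 <= n ^ 18 by rewrite leq_exp2r.
  by apply: leq_trans.
have -> : n ^ 20 = n ^ 2 * n ^ 18 by rewrite -expnD.
nia.
Qed.

Lemma f_poly : poly_time f.
Proof.
exists M, 20; split => // I.
set u := to_tape M (enc I).
have hu : all okIn u.
  rewrite /u /to_tape; elim: (enc I) => //= s w ->; rewrite andbT -/(code s).
  by rewrite /okIn /okO code_val; case: s.
have hinit := init_run hu.
have [N [cf [hN [hs [hstop hout]]]]] := @loop u 0 q0 [::] [::] hu isT (or_introl erefl).
exists cf; split.
  have hsz : size u = size (enc I) by rewrite size_map.
  have hle : size u + (size u).+2 + N <= size (enc I) ^ 20 + 20.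
    rewrite -hsz; apply: leq_trans (bound (size u)); move: hN; rewrite [size [::]]/= muln0 addn0 => hN.
    rewrite (_ : size u ^ 2 = size u * size u); last by rewrite expnS expn1.
    have aux : forall n N, N <= n * (5 * n + 7) + 1 -> n + n.+2 + N <= 5 * (n * n) + 9 * n + 3.
      by move=> n N0 h; nia.
    exact: aux.
  have -> : init M (enc I) = mk None [::] u by [].
  rewrite -(subnKC hle) (run_steps _ (steps_trans hinit hs)).
  exact: run_halt.
rewrite hout cat0s.
have -> : u = map code (enc I) by [].
have -> : to_tape M (enc (f I)) = map code (enc (f I)) by [].
by rewrite bridge // enc_run.
Qed.

Unset Implicit Arguments.

Theorem theorem29 (k : nat) (hk : 1 <= k) :
  CV_reduction (ABD_CNF k) (ABD_NAE k.+1) /\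
  CV_reduction (PABD_CNF k) (PABD_NAE k.+1).
Proof.
have hv : exists c : nat, forall I : Instance, nvars (f I) <= nvars I + c.
  by exists 1; exact: nvars_f.
split; exists f; (split; [exact: f_poly | split; [ | exact: hv]]).
- move=> I; rewrite /ABD_CNF /ABD_NAE wf_f; split; case=> hw h; split => //.
    by apply/(sem_equiv false hw).
  by apply/(sem_equiv false hw).
- move=> I; rewrite /PABD_CNF /PABD_NAE wf_f; split; case=> hw h; split => //.
    by apply/(sem_equiv true hw).
  by apply/(sem_equiv true hw).
Qed.
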